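(* Let $\mathcal K$ be a simplicial complex on $[m]$, and let $\mathcal L$ be the simplicial complex on $[m+1]$ given by $$\mathcal L=\{\,I: I\subset[m]\,\}\ \cup\ \{\,I\cup\{m+1\}: I\in\mathcal K\,\}$$ (the union of the full simplex on $[m]$ and the cone over $\mathcal K$ with apex $m+1$). Then there is a homotopy equivalence $U(\mathcal K)\simeq D(\mathcal L)$, where $D(\mathcal L)\subset\mathbb C^{m+1}$. The same holds for real arrangement complements: $U_{\mathbb R}(\mathcal K)\simeq D_{\mathbb R}(\mathcal L)$.
   Context: A simplicial complex on a finite set $V$ is a collection of subsets of $V$ containing $\varnothing$ and closed under taking subsets. For a simplicial complex $\mathcal K$ on $[n]$ and $I=\{i_1,\dots,i_k\}\subset[n]$ let $C_I=\{z\in\mathbb C^n: z_{i_1}=\dots=z_{i_k}=0\}$ and $D_I=\{z\in\mathbb C^n: z_{i_1}=\dots=z_{i_k}\}$; set $U(\mathcal K)=\mathbb C^n\setminus\bigcup_{I\notin\mathcal K}C_I$ and $D(\mathcal K)=\mathbb C^n\setminus\bigcup_{I\notin\mathcal K}D_I$. $U_{\mathbb R}$ and $D_{\mathbb R}$ are defined analogously in $\mathbb R^n$. *)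

(* Defs.v *)
From HB Require Import structures.
From mathcomp Require Import all_boot all_algebra.
From mathcomp Require Import all_classical all_reals all_analysis.
From mathcomp.real_closed Require Import complex.
Export numFieldNormedType.Exports.

Set Implicit Arguments.
Unset Strict Implicit.
Unset Printing Implicit Defensive.

Local Open Scope ring_scope.
Local Open Scope classical_set_scope.

Definition simplicial_complex (n : nat) (K : {set {set 'I_n}}) : Prop :=
  (finset.set0 : {set 'I_n}) \in K /\ (forall I J : {set 'I_n}, J \subset I -> I \in K -> J \in K).

Definition coordC (F : numFieldType) (n : nat) (I : {set 'I_n}) : set 'rV[F]_n :=
  [set z | forall i, i \in I -> z ord0 i = 0].

Definition diagD (F : numFieldType) (n : nat) (I : {set 'I_n}) : set 'rV[F]_n :=
  [set z | forall i j, i \in I -> j \in I -> z ord0 i = z ord0 j].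

Definition Ucompl (F : numFieldType) (n : nat) (K : {set {set 'I_n}}) : set 'rV[F]_n :=
  [set z | forall I : {set 'I_n}, I \notin K -> ~ @coordC F n I z].

Definition Dcompl (F : numFieldType) (n : nat) (K : {set {set 'I_n}}) : set 'rV[F]_n :=
  [set z | forall I : {set 'I_n}, I \notin K -> ~ @diagD F n I z].

(* The complex L on [m+1]: all subsets of [m] together with the cone
   {J u {m+1} | J in K}; the apex m+1 is ord_max : 'I_m.+1. *)
Definition cone_complex (m : nat) (K : {set {set 'I_m}}) : {set {set 'I_m.+1}} :=
  finset [pred I : {set 'I_m.+1} | ord_max \notin I] :|:
  ((fun J : {set 'I_m} => ord_max |: (widen_ord (leqnSn m) @: J)) @: K).

Definition homotopic_on (R : realType) (X Y : topologicalType)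
    (A : set X) (B : set Y) (f g : X -> Y) : Prop :=
  exists H : R * X -> Y,
    {within [set t : R | 0 <= t <= 1] `*` A, continuous H} /\
    (forall t x, 0 <= t <= 1 -> A x -> B (H (t, x))) /\
    (forall x, A x -> H (0, x) = f x) /\
    (forall x, A x -> H (1, x) = g x).

Definition homotopy_equivalent (R : realType) (X Y : topologicalType)
    (A : set X) (B : set Y) : Prop :=
  exists (f : X -> Y) (g : Y -> X),
    {within A, continuous f} /\ (forall x, A x -> B (f x)) /\
    {within B, continuous g} /\ (forall y, B y -> A (g y)) /\
    homotopic_on R A A (g \o f) id /\ homotopic_on R B B (f \o g) id.

(* Main.v *)
Require Import Defs.
From mathcomp Require Import ring.
From HB Require Import structures.
From mathcomp Require Import all_boot all_algebra.
From mathcomp Require Import all_classical all_reals all_analysis.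
From mathcomp.real_closed Require Import complex.
Import numFieldNormedType.Exports.
Import GRing.Theory Num.Theory.
Local Open Scope ring_scope.
Local Open Scope classical_set_scope.

Lemma mx_cont (X T : topologicalType) m n (f : X -> 'M[T]_(m, n)) :
  (forall i j, continuous (fun x => f x i j)) -> continuous f.
Proof.
move=> hf x A [P Pn sPA].
have : \forall y \near x, forall ij : 'I_m * 'I_n, P ij.1 ij.2 (f y ij.1 ij.2).
  apply: filter_forall => ij; apply: (hf ij.1 ij.2); exact: Pn.
by apply: filterS => y Hy; apply: sPA => i j; exact: (Hy (i, j)).
Qed.

Lemma row_cont (X : topologicalType) (F : numFieldType) n (h : X -> 'I_n -> F) :
  (forall i, continuous (fun x => h x i)) -> continuous (fun x => \row_i h x i : 'rV[F]_n).
Proof.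
move=> hh; apply: mx_cont => i j.
have -> : (fun x => (\row_i0 h x i0) i j) = fun x => h x j.
  by apply: funext => x; rewrite mxE.
exact: hh.
Qed.

Lemma widen_lift m (j : 'I_m) : widen_ord (leqnSn m) j = lift ord_max j.
Proof. by apply: val_inj; rewrite /= /bump leqNgt ltn_ord. Qed.

Lemma mem_cone_lift m (X : {set 'I_m}) (j : 'I_m) :
  (lift ord_max j \in ord_max |: (widen_ord (leqnSn m) @: X)) = (j \in X).
Proof.
rewrite in_setU1 eq_sym (negbTE (neq_lift _ _)) /= -widen_lift mem_imset //.
by move=> a b /(congr1 val) /= /val_inj.
Qed.

Lemma max_cone m (X : {set 'I_m}) : ord_max \in ord_max |: (widen_ord (leqnSn m) @: X).
Proof. by rewrite setU11. Qed.

Section Comb.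
Variables (F : numFieldType) (m : nat) (K : {set {set 'I_m}}).

Definition gmap (z : 'rV[F]_m.+1) : 'rV[F]_m :=
  \row_i (z ord0 (lift ord_max i) - z ord0 ord_max).

Lemma D_of_U z : Ucompl K (gmap z) -> Dcompl (cone_complex K) z.
Proof.
move=> Hu I notL HD.
have maxI : ord_max \in I.
  apply/negPn/negP => nI; move: notL; rewrite /cone_complex inE negb_or => /andP[+ _].
  by rewrite inE /= nI.
pose J := [set j : 'I_m | lift ord_max j \in I]%SET.
have IJ : I = ord_max |: (widen_ord (leqnSn m) @: J).
  apply/setP => x; case: (unliftP ord_max x) => [j ->|->].
    by rewrite (@mem_cone_lift m J j) inE.
  by rewrite in_setU1 eqxx maxI.
have notJ : J \notin K.
  apply/negP => JK; move: notL; rewrite /cone_complex inE negb_or => /andP[_].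
  by rewrite IJ; move/negP; apply; apply: imset_f.
apply: (Hu J notJ) => j; rewrite inE => jI.
by rewrite mxE; apply/eqP; rewrite subr_eq0; apply/eqP; apply: HD.
Qed.

Lemma U_of_D z : Dcompl (cone_complex K) z -> Ucompl K (gmap z).
Proof.
move=> Hd J notJ HC.
apply: (Hd (ord_max |: (widen_ord (leqnSn m) @: J))).
  rewrite /cone_complex inE negb_or; apply/andP; split.
    by rewrite inE /= in_setU1 eqxx.
  apply/negP => /imsetP [J' J'K eqJ]; move/negP: notJ; apply.
  suff -> : J = J' by [].
  apply/setP => j; by rewrite -mem_cone_lift eqJ mem_cone_lift.
have key : forall i, i \in ord_max |: (widen_ord (leqnSn m) @: J) -> z ord0 i = z ord0 ord_max.
  move=> i; case: (unliftP ord_max i) => [j ->|-> //].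
  rewrite mem_cone_lift => /HC; rewrite mxE => /eqP; rewrite subr_eq0 => /eqP //.
by move=> i j /key -> /key ->.
Qed.
End Comb.
Section Main.
Variables (R : realType) (F : numFieldType) (phi : R -> F).
Hypotheses (phic : continuous phi) (phi0 : phi 0 = 0) (phi1 : phi 1 = 1).
Variables (m : nat) (K : {set {set 'I_m}}).

Definition fmap (w : 'rV[F]_m) : 'rV[F]_m.+1 :=
  \row_i (if unlift ord_max i is Some j then w ord0 j else 0).

Definition Hmat (p : R * 'rV[F]_m.+1) : 'rV[F]_m.+1 :=
  \row_i (if i == ord_max then phi p.1 * p.2 ord0 ord_max
          else p.2 ord0 i - (1 - phi p.1) * p.2 ord0 ord_max).

Lemma c2 n i : continuous (fun p : R * 'rV[F]_n => p.2 ord0 i).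
Proof.
move=> p; apply: (@continuous_comp _ _ _ snd (fun z : 'rV[F]_n => z ord0 i)).
  exact: cvg_snd.
exact: coord_continuous.
Qed.

Lemma c1 n : continuous (fun p : R * 'rV[F]_n => phi p.1).
Proof.
move=> p; apply: (@continuous_comp _ _ _ fst phi); first exact: cvg_fst.
exact: phic.
Qed.

Lemma gmap_cont : continuous (@gmap F m).
Proof.
apply: row_cont => i x.
by have := (cvgB (@coord_continuous F 1 m.+1 ord0 (lift ord_max i) x) (@coord_continuous F 1 m.+1 ord0 ord_max x)); apply; apply: nbhs_filter.
Qed.

Lemma fmap_cont : continuous fmap.
Proof.
apply: row_cont => i; case: (unlift ord_max i) => [j|].
  exact: coord_continuous.
exact: cst_continuous.
Qed.

Lemma Hmat_cont : continuous Hmat.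
Proof.
apply: row_cont => i; case: (i == ord_max) => p.
  by have := cvgM (c1 _ p) (c2 _ ord_max p); apply; apply: nbhs_filter.
have := (cvgB (c2 _ i p) (cvgM (cvgB (cvg_cst (1:F)) (c1 _ p)) (c2 _ ord_max p))).
by apply; apply: nbhs_filter.
Qed.

Lemma gfK w : gmap F m (fmap w) = w.
Proof.
apply/rowP => j; rewrite !mxE liftK unlift_none subr0 //.
Qed.

Lemma gH p : gmap F m (Hmat p) = gmap F m p.2.
Proof.
apply/rowP => j; rewrite !mxE eqxx.
rewrite eq_sym (negbTE (neq_lift _ _)).
ring.

Qed.

Lemma H0 z : Hmat (0, z) = fmap (gmap F m z).
Proof.
apply/rowP => i; rewrite !mxE /= phi0.
case: (unliftP ord_max i) => [j ->|->].
  by rewrite eq_sym (negbTE (neq_lift _ _)) mxE subr0 mul1r.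
by rewrite eqxx mul0r.
Qed.

Lemma H1 z : Hmat (1, z) = z.
Proof.
apply/rowP => i; rewrite !mxE /= phi1.
case: eqP => [->|_]; first by rewrite mul1r.
by rewrite subrr mul0r subr0.
Qed.

Lemma main_gen : homotopy_equivalent R (@Ucompl F m K) (@Dcompl F m.+1 (cone_complex K)).
Proof.
exists fmap, (@gmap F m); split; first exact: continuous_subspaceT fmap_cont.
split; first by move=> w Uw; apply: D_of_U; rewrite gfK.
split; first exact: continuous_subspaceT gmap_cont.
split; first by move=> z Dz; apply: U_of_D.
split.
  exists (fun p => p.2); split.
    apply: continuous_subspaceT => p; exact: cvg_snd.
  split; first by move=> t x _.
  by split => x _ //=; rewrite gfK.
exists Hmat; split; first exact: continuous_subspaceT Hmat_cont.
split; first by move=> t x _ Dx; apply: D_of_U; rewrite gH; apply: U_of_D.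
by split => x _; rewrite ?H0 ?H1.
Qed.
End Main.
Lemma RC_cont (R : realType) : continuous (fun t : R => (t%:C)%C : (R[i] : numClosedFieldType)).
Proof.
move=> t A /nbhs_ballP [e e0 eA]; apply/nbhs_ballP.
have e1 : (0 : R[i]) < e := e0.
move: e1; rewrite ltcE /= => /andP [/eqP Ie Re0].
exists (complex.Re e) => // s; rewrite /ball /= => Hs; apply: eA.
rewrite /ball /= -rmorphB normc_def /= expr0n /= addr0 sqrtr_sqr.
rewrite [X in _ < X](complexE e) Ie /= mulr0 addr0 ltcR.
done.
Qed.

Theorem theorem4p1 (R : realType) (m : nat) (K : {set {set 'I_m}}) :
  simplicial_complex K ->
  homotopy_equivalent R
    (@Ucompl (R[i] : numClosedFieldType) m K)
    (@Dcompl (R[i] : numClosedFieldType) m.+1 (cone_complex K)) /\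
  homotopy_equivalent R (@Ucompl R m K) (@Dcompl R m.+1 (cone_complex K)).
Proof.
move=> _; split.
  apply: (@main_gen R (R[i] : numClosedFieldType) (fun t : R => (t%:C)%C)).
  - exact: RC_cont.
  - by [].
  - by [].
apply: (@main_gen R R id).
- by move=> x.
- by [].
- by [].
Qed.
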